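(* Let $f\colon\mathbb{R}^n\to\mathbb{R}$ be differentiable, $\mu$-strongly convex, with $\|\nabla f(x)-\nabla f(y)\|\le L\|x-y\|$ for all $x,y$ (Euclidean norm), where $0<\mu<L$, and let $x_\star$ be its minimizer, $f_\star=f(x_\star)$. Let $\kappa=L/\mu$ and $\gamma=\frac{\sqrt{8\kappa+1}+3}{2\kappa-2}$. Given $x_0$, let $y_0=x_0$ and for $k=0,1,\dots$ \[ y_{k+1}=x_k-\tfrac1L\nabla f(x_k),\qquad x_{k+1}=y_{k+1}+\frac{1}{2\gamma+1}(y_{k+1}-y_k)+\frac{1}{2\gamma+1}(y_{k+1}-x_k). \] Then for $k=1,2,\dots$, \[ f(y_k)-f_\star\le(1+\gamma)^{-k+1}\,\frac{\mu+2L}{2}\,\|x_0-x_\star\|^2, \] and this bound is $\mathcal{O}\big(\exp(-\sqrt2\,k/\sqrt\kappa)\big)$.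
   Context: A function $f$ is $\mu$-strongly convex if $f(x)-\frac{\mu}{2}\|x\|^2$ is convex. The iteration is called SC-OGM. *)

(* Defs.v *)
From HB Require Import structures.
From mathcomp Require Import all_boot all_order all_algebra.
From mathcomp Require Import all_classical all_reals all_analysis.
Set Implicit Arguments. Unset Strict Implicit. Unset Printing Implicit Defensive.
Import Order.TTheory GRing.Theory Num.Theory.
Import numFieldNormedType.Exports.
Local Open Scope ring_scope.

Section SCOGM.
Variables (R : realType) (n : nat).

Definition vec := 'rV[R]_n.

Definition dotp (u v : vec) : R := \sum_(i < n) u ord0 i * v ord0 i.
Definition enorm (u : vec) : R := Num.sqrt (dotp u u).

Definition ebasis (i : 'I_n) : vec := \row_(j < n) (if j == i then 1 else 0).

Definition grad (f : vec -> R) (x : vec) : vec :=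
  \row_(i < n) ('D_(ebasis i) f x).

Definition convex_fun (g : vec -> R) : Prop :=
  forall (x y : vec) (t : R), 0 <= t -> t <= 1 ->
    g (t *: x + (1 - t) *: y) <= t * g x + (1 - t) * g y.

Definition strongly_convex (mu : R) (f : vec -> R) : Prop :=
  convex_fun (fun x => f x - mu / 2 * enorm x ^+ 2).

Fixpoint scogm (g : vec -> vec) (L gam : R) (x0 : vec) (k : nat) : vec * vec :=
  match k with
  | O => (x0, x0)
  | S k' =>
      let (x, y) := scogm g L gam x0 k' in
      let y' := x - L^-1 *: g x in
      (y' + (2 * gam + 1)^-1 *: (y' - y) + (2 * gam + 1)^-1 *: (y' - x), y')
  end.

End SCOGM.

(* Main.v *)
Require Import Defs.
From HB Require Import structures.
From mathcomp Require Import all_boot all_order all_algebra.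
From mathcomp Require Import all_classical all_reals all_analysis.
From mathcomp Require Import ring lra.
Import Order.TTheory GRing.Theory Num.Theory.
Import numFieldNormedType.Exports.
Local Open Scope ring_scope.
Section Dot.
Context {R : realType} {n : nat}.
Implicit Types (u v w : vec R n) (a b : R).

Lemma dotpC u v : dotp u v = dotp v u.
Proof. by rewrite /dotp; apply: eq_bigr => i _; rewrite mulrC. Qed.

Lemma dotpDl u v w : dotp (u + v) w = dotp u w + dotp v w.
Proof. by rewrite /dotp -big_split; apply: eq_bigr => i _; rewrite !mxE mulrDl. Qed.

Lemma dotpDr u v w : dotp w (u + v) = dotp w u + dotp w v.
Proof. by rewrite dotpC dotpDl !(dotpC w). Qed.

Lemma dotpZl a u v : dotp (a *: u) v = a * dotp u v.
Proof. by rewrite /dotp mulr_sumr; apply: eq_bigr => i _; rewrite !mxE mulrA. Qed.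

Lemma dotpZr a u v : dotp u (a *: v) = a * dotp u v.
Proof. by rewrite dotpC dotpZl dotpC. Qed.

Lemma dotpNl u v : dotp (- u) v = - dotp u v.
Proof. by rewrite -scaleN1r dotpZl mulN1r. Qed.

Lemma dotpNr u v : dotp u (- v) = - dotp u v.
Proof. by rewrite dotpC dotpNl dotpC. Qed.

Lemma dotp0l v : dotp 0 v = 0.
Proof. by rewrite -(scale0r (0 : vec R n)) dotpZl mul0r. Qed.

Lemma dotp0r v : dotp v 0 = 0.
Proof. by rewrite dotpC dotp0l. Qed.

Lemma dotp_ge0 u : 0 <= dotp u u.
Proof. by rewrite /dotp; apply: sumr_ge0 => i _; rewrite -expr2 sqr_ge0. Qed.

Lemma enorm_ge0 u : 0 <= enorm u.
Proof. exact: sqrtr_ge0. Qed.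

Lemma enorm_sq u : enorm u ^+ 2 = dotp u u.
Proof. by rewrite /enorm sqr_sqrtr // dotp_ge0. Qed.

Lemma dotp_eq0 u : dotp u u = 0 -> u = 0.
Proof.
move=> /eqP; rewrite /dotp psumr_eq0 => [/allP H|i _]; last by rewrite -expr2 sqr_ge0.
apply/rowP => i; rewrite !mxE.
have := H i (mem_index_enum _); rewrite -expr2 sqrf_eq0 => /eqP.
by rewrite (ord1 ord0).
Qed.

End Dot.

Local Close Scope classical_set_scope.
Definition interpQ {R : realType} {n : nat} (mu L Fi Fj : R) (xi xj gi gj : vec R n) : R :=
  (Fi - Fj - dotp gj (xi - xj) - mu / 2 * dotp (xi - xj) (xi - xj)
   - dotp (gi - gj - mu *: (xi - xj)) (gi - gj - mu *: (xi - xj)) / (2 * (L - mu))).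

Section StepAlg.
Variables (R : realType) (n : nat).

Ltac dexp := rewrite ?(dotpDl, dotpDr, dotpZl, dotpZr, dotpNl, dotpNr, dotp0l, dotp0r).

Lemma step_alg (L g : R) (e gg w gp e' w' : vec R n) (F F' : R) :
  0 < L -> 0 < g ->
  let mu := L * g ^+ 2 / ((g + 1) * (g + 2)) in
  e' = ((g + 1) / (2 * g + 1)) *: (e - L^-1 *: gg) + (g / (2 * g + 1)) *: w ->
  w' = (1 + g)^-1 *: w + (g / (1 + g)) *: e' - ((g + 2) / (g * L)) *: gp ->
  0 <= interpQ mu L F F' e e' gg gp ->
  0 <= interpQ mu L 0 F' 0 e' 0 gp ->
  (1 + g) * (F' - dotp gp gp / (2 * L) + mu / 2 * dotp w' w')
   <= F - dotp gg gg / (2 * L) + mu / 2 * dotp w w.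
Proof.
move=> L0 g0 mu He' Hw' Q1 Q2.
pose den := g ^+ 3 + 2 * g ^+ 2 + 5 * g + 2.
pose d0 := g ^+ 3 * den / (2 * (g + 2) * (2 * g + 1) ^+ 2 * (3 * g + 2)).
pose l01 := (g ^+ 3 - g ^+ 2 - 5 * g - 2) / den.
pose l02 := - (g * (g + 2) * (2 * g + 1)) / den.
pose d1 := g ^+ 5 * (g ^+ 2 + 5 * g + 2) / (2 * (g + 1) * (g + 2) * (3 * g + 2) * den).
pose l12 := - ((g + 1) * (g + 2) ^+ 2 * (2 * g + 1)) / (g ^+ 2 * (g ^+ 2 + 5 * g + 2)).
pose d2 := g ^+ 2 / (2 * (g ^+ 2 + 5 * g + 2)).
pose s0 := e - L^-1 *: gg + l01 *: w + (l02 / L) *: gp.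
pose s1 := w + (l12 / L) *: gp.
have key : F - dotp gg gg / (2 * L) + mu / 2 * dotp w w
   - (1 + g) * (F' - dotp gp gp / (2 * L) + mu / 2 * dotp w' w')
   = interpQ mu L F F' e e' gg gp + g * interpQ mu L 0 F' 0 e' 0 gp
     + L * d0 * dotp s0 s0 + L * d1 * dotp s1 s1 + d2 / L * dotp gp gp.
  rewrite /interpQ /s0 /s1 Hw' He' /mu.
  dexp.
  rewrite ?(dotpC gg e) ?(dotpC w e) ?(dotpC gp e) ?(dotpC w gg) ?(dotpC gp gg) ?(dotpC gp w).
  rewrite /d0 /d1 /d2 /l01 /l02 /l12 /den.
  field.
  have g2 : 0 < g ^+ 2 by rewrite exprn_gt0.
  have g3 : 0 < g ^+ 3 by rewrite exprn_gt0.
  have LL : L * ((g + 1) * (g + 2)) - L * g ^+ 2 = L * (3 * g + 2) by ring.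
  rewrite LL.
  by rewrite !mulf_neq0 // ?gt_eqF // ?lt0r_neq0 //; lra.
have g2 : 0 < g ^+ 2 by rewrite exprn_gt0.
have g3 : 0 < g ^+ 3 by rewrite exprn_gt0.
have g5 : 0 < g ^+ 5 by rewrite exprn_gt0.
have dn : 0 < den by rewrite /den; lra.
rewrite -subr_ge0 key.
have Hd0 : 0 <= d0.
  rewrite /d0; apply: divr_ge0; first by apply: mulr_ge0; lra.
  by rewrite !mulr_ge0 // ?exprn_ge0 //; lra.
have Hd1 : 0 <= d1.
  rewrite /d1; apply: divr_ge0; first by apply: mulr_ge0; lra.
  by rewrite !mulr_ge0 //; lra.
have Hd2 : 0 <= d2.
  by rewrite /d2; apply: divr_ge0; lra.
have := dotp_ge0 s0; have := dotp_ge0 s1; have := dotp_ge0 gp.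
move=> h1 h2 h3.
apply: addr_ge0; [apply: addr_ge0; [apply: addr_ge0; [apply: addr_ge0|]|]|].
- exact: Q1.
- exact: mulr_ge0 (ltW g0) Q2.
- exact: mulr_ge0 (mulr_ge0 (ltW L0) Hd0) h3.
- exact: mulr_ge0 (mulr_ge0 (ltW L0) Hd1) h2.
- exact: mulr_ge0 (divr_ge0 Hd2 (ltW L0)) h1.
Qed.

Lemma init_alg (L g F0 : R) (e gg w : vec R n) :
  0 < L -> 0 < g ->
  let mu := L * g ^+ 2 / ((g + 1) * (g + 2)) in
  w = e - ((g + 2) / (g * L)) *: gg ->
  0 <= interpQ mu L 0 F0 0 e 0 gg ->
  dotp gg gg <= L ^+ 2 * dotp e e ->
  F0 - dotp gg gg / (2 * L) + mu / 2 * dotp w w <= (mu + 2 * L) / 2 * dotp e e.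
Proof.
move=> L0 g0 mu Hw Q1 Lip.
pose P4 := g ^+ 4 + 5 * g ^+ 3 + 6 * g ^+ 2 + 5 * g + 2.
pose lam := 1 / (2 * (1 + g) ^+ 2).
pose de := P4 / (2 * (g + 1) ^+ 2 * (3 * g + 2)).
pose rho := - ((g + 1) * (g ^+ 3 + g ^+ 2 + 3 * g + 2)) / P4.
pose rest := g * (3 * g ^+ 5 + 15 * g ^+ 4 + 31 * g ^+ 3 + 33 * g ^+ 2 + 21 * g + 6)
   / (2 * (g + 1) ^+ 2 * P4).
pose u := gg + (L * rho) *: e.
have key : (mu + 2 * L) / 2 * dotp e e - (F0 - dotp gg gg / (2 * L) + mu / 2 * dotp w w)
  = interpQ mu L 0 F0 0 e 0 gg + lam / L * (L ^+ 2 * dotp e e - dotp gg gg)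
    + de / L * dotp u u + L * rest * dotp e e.
  rewrite /interpQ /u Hw /mu.
  dexp.
  rewrite ?(dotpC gg e).
  rewrite /lam /de /rho /rest /P4.
  field.
  have g2 : 0 < g ^+ 2 by rewrite exprn_gt0.
  have g3 : 0 < g ^+ 3 by rewrite exprn_gt0.
  have g4 : 0 < g ^+ 4 by rewrite exprn_gt0.
  have LL : L * ((g + 1) * (g + 2)) - L * g ^+ 2 = L * (3 * g + 2) by ring.
  rewrite LL.
  by rewrite !mulf_neq0 // ?gt_eqF // ?lt0r_neq0 //; lra.
have g2 : 0 < g ^+ 2 by rewrite exprn_gt0.
have g3 : 0 < g ^+ 3 by rewrite exprn_gt0.
have g4 : 0 < g ^+ 4 by rewrite exprn_gt0.
have g5 : 0 < g ^+ 5 by rewrite exprn_gt0.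
have P40 : 0 < P4 by rewrite /P4; lra.
rewrite -subr_ge0 key.
have Hlam : 0 <= lam / L.
  by rewrite /lam; apply: divr_ge0; [apply: divr_ge0; [lra | rewrite mulr_ge0 ?exprn_ge0 //; lra] | exact: ltW].
have Hde : 0 <= de / L.
  rewrite /de; apply: divr_ge0; last exact: ltW.
  by apply: divr_ge0; [exact: ltW | rewrite !mulr_ge0 ?exprn_ge0 //; lra].
have Hrest : 0 <= L * rest.
  rewrite /rest; apply: mulr_ge0; first exact: ltW.
  apply: divr_ge0; first by apply: mulr_ge0; lra.
  by rewrite !mulr_ge0 ?exprn_ge0 //; lra.
have h1 := dotp_ge0 u; have h2 := dotp_ge0 e.
apply: addr_ge0; [apply: addr_ge0; [apply: addr_ge0|]|].
- exact: Q1.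
- by apply: mulr_ge0 => //; rewrite subr_ge0.
- exact: mulr_ge0 Hde h1.
- exact: mulr_ge0 Hrest h2.
Qed.

End StepAlg.

Local Close Scope classical_set_scope.
Section Interp.
Context {R : realType} {n : nat}.
Ltac dexp := rewrite ?(dotpDl, dotpDr, dotpZl, dotpZr, dotpNl, dotpNr, dotp0l, dotp0r).

Lemma interp_alg (mu L : R) (f : vec R n -> R) (G : vec R n -> vec R n) :
  0 < mu -> mu < L ->
  (forall x z, f x + dotp (G x) (z - x) + mu / 2 * dotp (z - x) (z - x) <= f z) ->
  (forall x z, f z <= f x + dotp (G x) (z - x) + L / 2 * dotp (z - x) (z - x)) ->
  forall xi xj, 0 <= interpQ mu L (f xi) (f xj) xi xj (G xi) (G xj).
Proof.
move=> mu0 muL lower upper xi xj.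
pose w := xi - (L - mu)^-1 *: (G xi - G xj - mu *: (xi - xj)).
have A := lower xj w; have B := upper xi w.
have -> : interpQ mu L (f xi) (f xj) xi xj (G xi) (G xj) =
  (f xi + dotp (G xi) (w - xi) + L / 2 * dotp (w - xi) (w - xi) - f w)
  + (f w - (f xj + dotp (G xj) (w - xj) + mu / 2 * dotp (w - xj) (w - xj))).
  rewrite /interpQ /w; dexp.
  rewrite ?(dotpC (G xi) xi) ?(dotpC (G xj) xi) ?(dotpC (G xi) xj) ?(dotpC (G xj) xj)
    ?(dotpC xj xi) ?(dotpC (G xj) (G xi)).
  field; rewrite subr_eq0; apply/negP => /eqP H; lra.
by apply: addr_ge0; rewrite subr_ge0.
Qed.

Lemma gstar0 (L : R) (f : vec R n -> R) (G : vec R n -> vec R n) (xs : vec R n) :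
  0 < L ->
  (forall x z, f z <= f x + dotp (G x) (z - x) + L / 2 * dotp (z - x) (z - x)) ->
  (forall x, f xs <= f x) -> G xs = 0.
Proof.
move=> L0 upper min.
have U := upper xs (xs - L^-1 *: G xs).
have M := min (xs - L^-1 *: G xs).
have E : xs - L^-1 *: G xs - xs = - (L^-1 *: G xs).
  by rewrite addrC addKr.
rewrite E in U; move: U; dexp; rewrite !mulrN !opprK => U.
have H0 := dotp_ge0 (G xs).
apply: dotp_eq0; apply/eqP; rewrite eq_le H0 andbT.
have : L^-1 * dotp (G xs) (G xs) / 2 <= 0.
  have -> : L^-1 * dotp (G xs) (G xs) / 2 =
    L^-1 * dotp (G xs) (G xs) - L / 2 * (L^-1 * (L^-1 * dotp (G xs) (G xs))).
    by field; rewrite gt_eqF.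
  move: (le_trans M U).
  set A := L^-1 * dotp (G xs) (G xs).
  set B := L / 2 * (L^-1 * A).
  lra.
by rewrite pmulr_lle0 ?invr_gt0 ?ltr0n // pmulr_rle0 // invr_gt0.
Qed.
End Interp.

Local Close Scope classical_set_scope.
Local Open Scope classical_set_scope.
Section Analysis.
Context {R : realType} {n : nat}.
Implicit Types (f : vec R n -> R) (x v z : vec R n).

Lemma row_decomp (v : vec R n) : v = \sum_(i < n) v ord0 i *: @ebasis R n i.
Proof.
apply/rowP => j; rewrite summxE (bigD1 j) //= big1 => [|i ij].
  by rewrite !mxE eqxx mulr1 addr0 (ord1 ord0).
by rewrite !mxE eq_sym (negbTE ij) mulr0.
Qed.

Lemma dgrad f x v : differentiable f x -> derive f x v = dotp (grad f x) v.
Proof.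
move=> df; apply: (etrans (@deriveE _ _ _ f x v df)).
have -> : 'd f x v = 'd f x (\sum_(i < n) v ord0 i *: @ebasis R n i) by rewrite -row_decomp.
rewrite linear_sum /dotp.
apply: eq_bigr => i _; rewrite linearZ /= !mxE /= mulrC.
by rewrite (@deriveE _ _ _ f x (@ebasis R n i) df).
Qed.

Lemma line_derive f x v t : differentiable f (t *: v + x) ->
  is_derive t 1 (fun s => f (s *: v + x)) ('D_v f (t *: v + x)).
Proof.
move=> df.
have E : (fun h : R => h^-1 *: (((fun s => f (s *: v + x)) \o shift t) (h *: 1)
             - (fun s => f (s *: v + x)) t))
       = (fun h : R => h^-1 *: ((f \o shift (t *: v + x)) (h *: v) - f (t *: v + x))).
  apply: funext => h /=; congr (_ *: (f _ - _)).
  by rewrite [_%:A]mulr1 scalerDl addrA.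
apply: DeriveDef; first by rewrite /derivable E; exact: diff_derivable.
by rewrite /derive E.
Qed.

Lemma deriv_right_le f x v (K Dm : R) :
  derivable f x v -> 0 <= Dm ->
  (forall t, 0 < t -> t < 1 -> t^-1 * (f (t *: v + x) - f x) <= K + Dm * t) ->
  'D_v f x <= K.
Proof.
move=> df Dm0 H.
have dfD : (fun h : R => h^-1 *: ((f \o shift x) (h *: v) - f x)) @ 0^' --> 'D_v f x := df.
have dfR : (fun h : R => h^-1 *: ((f \o shift x) (h *: v) - f x)) @ 0^'+ --> 'D_v f x.
  apply: cvg_trans dfD; apply: cvg_app.
  move=> A [e egt0 Ae]; exists e => // y ye ygt0; apply: Ae => //.
  exact/lt0r_neq0.
apply/ler_addgt0Pr => e e0.
pose s := e / (Dm + e + 1).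
have s0 : 0 < s by apply: divr_gt0; lra.
have s1 : s < 1 by rewrite ltr_pdivrMr; lra.
have Dms : Dm * s <= e.
  by rewrite /s mulrA ler_pdivrMr; [nra|lra].
apply: (cvgr_to_le dfR).
near=> h.
have h0 : 0 < h by near: h; exists 1 => /=.
have hs : h < s.
  near: h; exists s => // y /=; rewrite sub0r normrN => ys y0.
  by move: ys; rewrite gtr0_norm.
rewrite /=.
apply: le_trans (H h h0 (lt_trans hs s1)) _.
have : Dm * h <= Dm * s by apply: ler_wpM2l => //; exact: ltW.
lra.
Unshelve. all: by end_near.
Qed.

Ltac dexp := rewrite ?(dotpDl, dotpDr, dotpZl, dotpZr, dotpNl, dotpNr, dotp0l, dotp0r).

Lemma sc_lower f (mu : R) : (forall x, differentiable f x) -> strongly_convex mu f ->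
  0 < mu ->
  forall x z, f x + dotp (grad f x) (z - x) + mu / 2 * dotp (z - x) (z - x) <= f z.
Proof.
move=> df sc mu0 x z.
set v := z - x.
rewrite -(dgrad f x v (df x)).
have : 'D_v f x <= f z - f x - mu / 2 * dotp v v.
  apply: (@deriv_right_le f x v _ (mu / 2 * dotp v v)).
  - exact: diff_derivable.
  - by apply: mulr_ge0; [lra | exact: dotp_ge0].
  move=> t t0 t1.
  have C := sc z x t (ltW t0) (ltW t1).
  have E : t *: z + (1 - t) *: x = t *: v + x.
    by apply/rowP => i; rewrite /v !mxE; ring.
  rewrite E /= !enorm_sq in C.
  have Ezz : dotp z z = dotp (v + x) (v + x) by rewrite /v subrK.
  rewrite Ezz in C; move: C; dexp => C.
  rewrite ?(dotpC x v) in C.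
  rewrite ler_pdivrMl //.
  nra.
lra.
Qed.

Lemma lip_upper f (L : R) : (forall x, differentiable f x) -> 0 < L ->
  (forall x y, enorm (grad f x - grad f y) <= L * enorm (x - y)) ->
  forall x z, f z <= f x + dotp (grad f x) (z - x) + L / 2 * dotp (z - x) (z - x).
Proof.
move=> df L0 lip x z.
set v := z - x.
set D0 := 'D_v f x.
set cc := L / 2 * dotp v v.
pose p : {poly R} := D0 *: 'X + cc *: 'X^2.
pose psi := fun s : R => f (s *: v + x) - p.[s].
pose dpsi := fun s : R => 'D_v f (s *: v + x) - (D0 + cc * (2 * s)).
have hd : forall s : R, is_derive s (1 : R) psi (dpsi s).
  move=> s.
  have H := is_deriveB (line_derive f x v s (df (s *: v + x))) (is_derive_poly p s).
  refine (is_derive_eq H _).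
  rewrite /dpsi /p !poly.derivE !hornerE /=.
  congr (_ - _); ring.
have cont : {within `[0, 1], continuous psi}.
  apply: derivable_within_continuous => y _.
  exact: (@ex_derive _ _ _ _ _ _ _ (hd y)).
have [c c01 Hc] := MVT ltr01 (fun y _ => hd y) cont.
have c0 : 0 < c by move: c01; rewrite in_itv /= => /andP[].
have key : dpsi c <= 0.
  rewrite /dpsi /D0 /= (dgrad f (c *: v + x) v (df _)) (dgrad f x v (df _)).
  set Dl := grad f (c *: v + x) - grad f x.
  have E1 : dotp (grad f (c *: v + x)) v - dotp (grad f x) v = dotp Dl v.
    by rewrite /Dl dotpDl dotpNl.
  have hl := lip (c *: v + x) x.
  have E2 : c *: v + x - x = c *: v by rewrite addrK.
  rewrite E2 -/Dl in hl.
  have hsq : dotp Dl Dl <= L ^+ 2 * dotp (c *: v) (c *: v).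
    rewrite -enorm_sq -(enorm_sq (c *: v)) -exprMn.
    by rewrite !expr2; apply: ler_pM => //; exact: enorm_ge0.
  rewrite dotpZl dotpZr in hsq.
  clearbody Dl v.
  have amgm := dotp_ge0 (Dl - (L * c) *: v).
  move: amgm; dexp; rewrite ?(dotpC v Dl) => amgm.
  have Lc : 0 < L * c by apply: mulr_gt0.
  have : (2 * (L * c)) * (dotp Dl v - L * c * dotp v v) <= 0.
    nra.
  rewrite pmulr_rle0; last lra.
  rewrite /cc => h.
  have -> : dotp (grad f (c *: v + x)) v - (dotp (grad f x) v + L / 2 * dotp v v * (2 * c))
     = (dotp (grad f (c *: v + x)) v - dotp (grad f x) v) - L * c * dotp v v by field.
  by rewrite E1 subr_le0 -subr_le0.
move: Hc; rewrite /psi /= !hornerE /= scale1r scale0r add0r subr0 mulr1.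
have -> : v + x = z by rewrite /v subrK.
rewrite -(dgrad f x v (df x)) -/D0.
move: key; rewrite /cc; lra.
Qed.

End Analysis.

Local Close Scope classical_set_scope.
Ltac dexp := rewrite ?(dotpDl, dotpDr, dotpZl, dotpZr, dotpNl, dotpNr, dotp0l, dotp0r).
Section Main.
Context {R : realType} {n : nat}.

Lemma scogmS (g : vec R n -> vec R n) (L gam : R) x0 k :
  scogm g L gam x0 k.+1 =
   ((scogm g L gam x0 k).1 - L^-1 *: g (scogm g L gam x0 k).1
      + (2 * gam + 1)^-1 *: ((scogm g L gam x0 k).1 - L^-1 *: g (scogm g L gam x0 k).1
                             - (scogm g L gam x0 k).2)
      + (2 * gam + 1)^-1 *: ((scogm g L gam x0 k).1 - L^-1 *: g (scogm g L gam x0 k).1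
                             - (scogm g L gam x0 k).1),
    (scogm g L gam x0 k).1 - L^-1 *: g (scogm g L gam x0 k).1).
Proof. by rewrite /=; case: (scogm g L gam x0 k). Qed.

Lemma interpQ_shift (mu L Fi Fj c : R) (xi xj s gi gj : vec R n) :
  interpQ mu L (Fi - c) (Fj - c) (xi - s) (xj - s) gi gj
  = interpQ mu L Fi Fj xi xj gi gj.
Proof.
rewrite /interpQ.
have -> : xi - s - (xj - s) = xi - xj by apply/rowP => i; rewrite !mxE; ring.
by have -> : Fi - c - (Fj - c) = Fi - Fj by ring.
Qed.

Lemma main_bound (f : vec R n -> R) (mu L gam : R) (xs x0 : vec R n) :
  0 < L -> 0 < gam -> 0 < mu -> mu < L ->
  mu = L * gam ^+ 2 / ((gam + 1) * (gam + 2)) ->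
  (forall x z, f x + dotp (grad f x) (z - x) + mu / 2 * dotp (z - x) (z - x) <= f z) ->
  (forall x z, f z <= f x + dotp (grad f x) (z - x) + L / 2 * dotp (z - x) (z - x)) ->
  (forall x y, enorm (grad f x - grad f y) <= L * enorm (x - y)) ->
  (forall x, f xs <= f x) ->
  forall k, f (scogm (grad f) L gam x0 k.+1).2 - f xs
     <= (1 + gam) ^- k * ((mu + 2 * L) / 2 * enorm (x0 - xs) ^+ 2).
Proof.
move=> L0 g0 mu0 muL hmu low up lip fmin.
have G0 : grad f xs = 0 := gstar0 L f (grad f) xs L0 up fmin.
have Q := interp_alg mu L f (grad f) mu0 muL low up.
pose X k := (scogm (grad f) L gam x0 k).1.
pose Y k := (scogm (grad f) L gam x0 k).2.
pose Z k := gam^-1 *: ((2 * gam + 1) *: X k - (gam + 1) *: Y k).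
have HY k : Y k.+1 = X k - L^-1 *: grad f (X k) by rewrite /Y /X scogmS.
have HX k : X k.+1 = Y k.+1 + (2 * gam + 1)^-1 *: (Y k.+1 - Y k)
                     + (2 * gam + 1)^-1 *: (Y k.+1 - X k).
  by rewrite /X /Y scogmS.
have g1 : gam + 1 != 0 by rewrite gt_eqF // ?addr_gt0.
have g1' : 1 + gam != 0 by rewrite gt_eqF // ?addr_gt0.
have g2 : 2 * gam + 1 != 0 by rewrite gt_eqF //; lra.
have gn : gam != 0 by rewrite gt_eqF.
have Ln : L != 0 by rewrite gt_eqF.
have HZ k : Z k.+1 = (1 + gam)^-1 *: Z k + (gam / (1 + gam)) *: X k
                     - ((gam + 2) / (gam * L)) *: grad f (X k).
  rewrite /Z HX HY; apply/rowP => i; rewrite !mxE; field.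
  by rewrite g1' g2 gn Ln.
have HXe k : X k.+1 - xs = ((gam + 1) / (2 * gam + 1)) *: ((X k - xs) - L^-1 *: grad f (X k))
                 + (gam / (2 * gam + 1)) *: (Z k.+1 - xs).
  rewrite /Z HY; apply/rowP => i; rewrite !mxE; field.
  by rewrite g2 gn Ln.
pose V k := f (X k) - f xs - dotp (grad f (X k)) (grad f (X k)) / (2 * L)
             + mu / 2 * dotp (Z k.+1 - xs) (Z k.+1 - xs).
have step k : (1 + gam) * V k.+1 <= V k.
  have Hw : Z k.+2 - xs = (1 + gam)^-1 *: (Z k.+1 - xs) + (gam / (1 + gam)) *: (X k.+1 - xs)
                 - ((gam + 2) / (gam * L)) *: grad f (X k.+1).
    rewrite (HZ k.+1); apply/rowP => i; rewrite !mxE; field.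
    by rewrite g1' gn Ln.
  have Q1 := Q (X k) (X k.+1).
  rewrite -(interpQ_shift _ _ _ _ (f xs) _ _ xs) in Q1.
  have Q2 := Q xs (X k.+1).
  rewrite -(interpQ_shift _ _ _ _ (f xs) _ _ xs) G0 !subrr in Q2.
  have := @step_alg R n L gam (X k - xs) (grad f (X k)) (Z k.+1 - xs) (grad f (X k.+1))
     (X k.+1 - xs) (Z k.+2 - xs) (f (X k) - f xs) (f (X k.+1) - f xs) L0 g0 (HXe k) Hw.
  rewrite -hmu => /(_ Q1 Q2).
  by rewrite /V; congr (_ <= _); rewrite !addrA.
have iter k : (1 + gam) ^+ k * V k <= V 0.
  elim: k => [|k IH]; first by rewrite expr0 mul1r.
  rewrite exprSr -mulrA; apply: le_trans IH.
  by apply: ler_wpM2l; [rewrite exprn_ge0 // ltW // addr_gt0 | exact: step].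
have X0 : X 0 = x0 by [].
have Y0 : Y 0 = x0 by [].
have HV0 : V 0 <= (mu + 2 * L) / 2 * dotp (x0 - xs) (x0 - xs).
  have Hw : Z 1 - xs = (x0 - xs) - ((gam + 2) / (gam * L)) *: grad f x0.
    rewrite (HZ 0) /Z X0 Y0; apply/rowP => i; rewrite !mxE; field.
    by rewrite g1' gn Ln.
  have Q2 := Q xs x0.
  rewrite -(interpQ_shift _ _ _ _ (f xs) _ _ xs) G0 !subrr in Q2.
  have Lp := lip x0 xs.
  rewrite G0 subr0 in Lp.
  have Lp2 : dotp (grad f x0) (grad f x0) <= L ^+ 2 * dotp (x0 - xs) (x0 - xs).
    rewrite -!enorm_sq -exprMn !expr2.
    by apply: ler_pM => //; exact: enorm_ge0.
  have := @init_alg R n L gam (f x0 - f xs) (x0 - xs) (grad f x0) (Z 1 - xs) L0 g0 Hw.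
  by rewrite -hmu => /(_ Q2 Lp2).
move=> k.
have hd : f (Y k.+1) - f xs <= V k.
  have U := up (X k) (Y k.+1).
  have E : Y k.+1 - X k = - (L^-1 *: grad f (X k)) by rewrite (HY k) addrC addKr.
  rewrite E in U; move: U; dexp; rewrite !mulrN !opprK => U.
  have E2 : - (L^-1 * dotp (grad f (X k)) (grad f (X k)))
        + L / 2 * (L^-1 * (L^-1 * dotp (grad f (X k)) (grad f (X k))))
        = - (dotp (grad f (X k)) (grad f (X k)) / (2 * L)) by field.
  have Hw := dotp_ge0 (Z k.+1 - xs).
  have Hm : 0 <= mu / 2 * dotp (Z k.+1 - xs) (Z k.+1 - xs) by apply: mulr_ge0 => //; lra.
  rewrite /V.
  move: U E2 Hm.
  set A := L^-1 * _.
  set B := L / 2 * _.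
  set C := dotp _ _ / (2 * L).
  set D := mu / 2 * _.
  lra.
have hk : V k <= (1 + gam) ^- k * V 0.
  have := iter k.
  have pk : 0 < (1 + gam) ^+ k by rewrite exprn_gt0 // addr_gt0.
  by rewrite -ler_pdivlMl.
have hV0 : 0 <= (1 + gam) ^- k by rewrite invr_ge0 exprn_ge0 // ltW // addr_gt0.
rewrite enorm_sq.
apply: le_trans hd _; apply: le_trans hk _.
exact: ler_wpM2l.
Qed.

End Main.

Local Close Scope classical_set_scope.
Local Open Scope classical_set_scope.
Section Exp.
Context {R : realType}.

Lemma pade (s : R) : 0 <= s -> s < 2 -> (2 - s) * expR s <= 2 + s.
Proof.
move=> s0 s2.
case: (eqVneq s 0) => [->|sn0]; first by rewrite expR0; lra.
have sp : 0 < s by rewrite lt_def sn0 s0.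
pose psi : R -> R := (cst 2 - id) * expR - (cst 2 + id).
have hd u : is_derive u (1:R) psi ((1 - u) * expR u - 1).
  have H1 : is_derive u (1:R) (cst (2:R)) 0 by apply: is_derive_cst.
  have H2 : is_derive u (1:R) (@id R) 1 by apply: is_derive_id.
  have H3 : is_derive u (1:R) (@expR R) (expR u) by apply: is_derive_expR.
  have H7 := is_deriveB (is_deriveM (is_deriveB H1 H2) H3) (is_deriveD H1 H2).
  refine (is_derive_eq H7 _).
  change ((2 - u) * expR u + expR u * (0 - 1) - (0 + 1) = (1 - u) * expR u - 1).
  ring.
have cont : {within `[0, s], continuous psi}.
  apply: derivable_within_continuous => y _.
  exact: (@ex_derive _ _ _ _ _ _ _ (hd y)).
have [c c0s Hc] := MVT sp (fun y _ => hd y) cont.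
have c0 : 0 < c by move: c0s; rewrite in_itv /= => /andP[].
have key : (1 - c) * expR c - 1 <= 0.
  have h := expR_ge1Dx (- c).
  have e1 := expRxMexpNx_1 c.
  have ep := expR_gt0 c.
  nra.
move: Hc.
change ((2 - s) * expR s - (2 + s) - ((2 - 0) * expR 0 - (2 + 0)) = ((1 - c) * expR c - 1) * (s - 0)
  -> (2 - s) * expR s <= 2 + s).
rewrite expR0 !subr0 addr0 mulr1 subrr subr0 => H.
by rewrite -subr_le0 H pmulr_lle0.
Qed.


Lemma gam_rel (kappa gam r : R) : 1 < kappa -> 0 <= r -> r ^+ 2 = 8 * kappa + 1 ->
  gam = (r + 3) / (2 * kappa - 2) ->
  0 < gam /\ (gam + 1) * (gam + 2) = kappa * gam ^+ 2.
Proof.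
move=> k1 r0 hr hg.
have kn : 2 * kappa - 2 != 0 by rewrite gt_eqF //; lra.
split; first by rewrite hg; apply: divr_gt0; lra.
have hk : kappa = (r ^+ 2 - 1) / 8 by rewrite hr; field.
rewrite hg hk; field.
by rewrite hr gt_eqF //; lra.
Qed.

Lemma gam_exp (kappa gam r t q : R) : 1 < kappa -> 0 <= r -> r ^+ 2 = 8 * kappa + 1 ->
  gam = (r + 3) / (2 * kappa - 2) -> 0 < t -> t ^+ 2 = kappa -> 0 < q -> q ^+ 2 = 2 ->
  expR (q / t) <= 1 + gam.
Proof.
move=> k1 r0 hr hg t0 ht q0 hq.
have t1 : 1 < t by nra.
have rq : 2 * q * t <= r.
  have : (2 * q * t) ^+ 2 <= r ^+ 2 by rewrite exprMn exprMn hq ht hr; lra.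
  move=> h.
  have m0 : 0 <= 2 * q * t by apply: mulr_ge0; [apply: mulr_ge0|]; lra.
  by rewrite -(ler_pXn2r (_ : 0 < 2)%N) ?inE //.
have hq2 : q < 2 * t by nra.
have s0 : 0 <= q / t by apply: divr_ge0; lra.
have s2 : q / t < 2 by rewrite ltr_pdivrMr //; lra.
have P := pade (q / t) s0 s2.
have hgam : gam * (2 * kappa - 2) = r + 3 by rewrite hg; field; rewrite gt_eqF //; lra.
have G : 2 * q <= gam * (2 * t - q).
  have : 2 * q * (2 * kappa - 2) <= gam * (2 * t - q) * (2 * kappa - 2).
    have -> : gam * (2 * t - q) * (2 * kappa - 2) = (r + 3) * (2 * t - q).
      by rewrite -hgam; ring.
    rewrite -ht.
    nra.
  by rewrite ler_pM2r //; lra.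
have H2 : 2 + q / t <= (1 + gam) * (2 - q / t).
  rewrite -subr_ge0.
  have -> : (1 + gam) * (2 - q / t) - (2 + q / t) = (gam * (2 * t - q) - 2 * q) / t.
    by field; rewrite gt_eqF.
  by apply: divr_ge0; lra.
have : (2 - q / t) * expR (q / t) <= (2 - q / t) * (1 + gam).
  by rewrite [(2 - q / t) * (1 + gam)]mulrC; exact: le_trans P H2.
by rewrite ler_pM2l // subr_gt0.
Qed.

End Exp.

Local Close Scope classical_set_scope.
Theorem theorem3 (R : realType) (n : nat) (f : vec R n -> R) (mu L : R)
  (xstar x0 : vec R n) :
  (forall x : vec R n, differentiable f x) ->
  strongly_convex mu f ->
  (forall x y : vec R n,
      enorm (grad f x - grad f y) <= L * enorm (x - y)) ->
  0 < mu -> mu < L ->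
  (forall x : vec R n, f xstar <= f x) ->
  let kappa := L / mu in
  let gam := (Num.sqrt (8 * kappa + 1) + 3) / (2 * kappa - 2) in
  let B := fun k : nat =>
    (1 + gam) ^- k.-1 * ((mu + 2 * L) / 2) * enorm (x0 - xstar) ^+ 2 in
  (forall k : nat, (1 <= k)%N ->
     f (scogm (grad f) L gam x0 k).2 - f xstar <= B k)
  /\
  (exists C : R, forall k : nat, (1 <= k)%N ->
     B k <= C * expR (- (Num.sqrt 2 * k%:R / Num.sqrt kappa))).
Proof.
move=> dfx sc lip mu0 muL fmin kappa gam B.
have L0 : 0 < L := lt_trans mu0 muL.
have k1 : 1 < kappa by rewrite /kappa ltr_pdivlMr // mul1r.
have kr : 0 <= 8 * kappa + 1 by lra.
have [g0 grel] := gam_rel _ _ _ k1 (sqrtr_ge0 _) (sqr_sqrtr kr) (erefl gam).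
have hmu : mu = L * gam ^+ 2 / ((gam + 1) * (gam + 2)).
  rewrite grel /kappa; field.
  by rewrite !gt_eqF.
have low := sc_lower f mu dfx sc mu0.
have up := lip_upper f L dfx L0 lip.
have MB := main_bound f mu L gam xstar x0 L0 g0 mu0 muL hmu low up lip fmin.
have gp : 0 < 1 + gam by rewrite addr_gt0.
have K0 : 0 <= (mu + 2 * L) / 2 * enorm (x0 - xstar) ^+ 2.
  by apply: mulr_ge0; [lra | exact: exprn_ge0 (enorm_ge0 _)].
split.
  case=> [//|k] _.
  by rewrite /B /= -mulrA; exact: MB.
exists ((1 + gam) * ((mu + 2 * L) / 2 * enorm (x0 - xstar) ^+ 2)).
case=> [//|k] _.
have tpos : 0 < Num.sqrt kappa by rewrite sqrtr_gt0; lra.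
have qpos : 0 < Num.sqrt (2 : R) by rewrite sqrtr_gt0.
have es := gam_exp _ _ _ _ _ k1 (sqrtr_ge0 _) (sqr_sqrtr kr) (erefl gam) tpos
  (sqr_sqrtr (ltW (lt_trans ltr01 k1))) qpos (sqr_sqrtr (ler0n _ 2)).
set s := Num.sqrt 2 / Num.sqrt kappa in es.
have E : expR (- (Num.sqrt 2 * k.+1%:R / Num.sqrt kappa)) = (expR s ^+ k.+1)^-1.
  rewrite expRN -expRM_natl /s; congr (expR _)^-1.
  by rewrite mulrA [_ * k.+1%:R]mulrC.
rewrite E /B /= -mulrA.
set K := (mu + 2 * L) / 2 * enorm (x0 - xstar) ^+ 2 in K0 *.
clearbody K.
have -> : (1 + gam) ^- k = (1 + gam) * (1 + gam) ^- k.+1.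
  by rewrite exprS invfM mulrA divff ?mul1r // gt_eqF.
rewrite -!mulrA; apply: ler_wpM2l; first exact: ltW.
rewrite [K * _]mulrC; apply: ler_wpM2r => //.
have es0 : 0 < expR s := expR_gt0 s.
have Hp1 : (1 + gam) ^+ k.+1 \in Num.pos by rewrite posrE exprn_gt0.
have Hp2 : expR s ^+ k.+1 \in Num.pos by rewrite posrE exprn_gt0.
have H : expR s ^+ k.+1 <= (1 + gam) ^+ k.+1.
  have Hx : expR s \in Num.nneg by rewrite nnegrE ltW.
  have Hy : 1 + gam \in Num.nneg by rewrite nnegrE ltW.
  exact: (lerXn2r k.+1 Hx Hy es).
rewrite -(lef_pV2 Hp1 Hp2) in H.
exact H.
Qed.
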